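(* Let $G$ be a $\mathrm{sat}(n,K_{2,3})$-graph with $\delta(G) = 3$ such that for every vertex $\alpha$ of degree $3$, the three neighbors of $\alpha$ are pairwise adjacent (i.e., $\lambda(G) = 3$). Then $e(G) \geq 2n-2$.
   Context: All graphs are finite and simple. A graph $G$ is $K_{2,3}$-saturated if $G$ contains no subgraph isomorphic to $K_{2,3}$, but for every pair of nonadjacent vertices $u,v$, the graph $G+uv$ contains a subgraph isomorphic to $K_{2,3}$. $\mathrm{sat}(n,K_{2,3})$ is the minimum number of edges of a $K_{2,3}$-saturated graph on $n$ vertices, and a $\mathrm{sat}(n,K_{2,3})$-graph is a $K_{2,3}$-saturated graph on $n$ vertices with exactly $\mathrm{sat}(n,K_{2,3})$ edges. $e(G)$ is the number of edges and $\delta(G)$ the minimum degree of $G$. $\lambda(G) = \min\{e(G[N(\alpha)]) : d(\alpha) = 3\}$, the minimum number of edges induced by the neighborhood of a degree-$3$ vertex. *)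

(* Defs.v *)
From mathcomp Require Import all_boot.
Set Implicit Arguments. Unset Strict Implicit. Unset Printing Implicit Defensive.

Definition simple_graph (n : nat) (g : rel 'I_n) : Prop :=
  (forall x, ~~ g x x) /\ (forall x y, g x y = g y x).

Definition nedges (n : nat) (g : rel 'I_n) : nat :=
  #|[set p : 'I_n * 'I_n | (p.1 < p.2) && g p.1 p.2]|.

Definition deg (n : nat) (g : rel 'I_n) (x : 'I_n) : nat := #|[set y | g x y]|.

Definition min_degree_eq (n : nat) (g : rel 'I_n) (d : nat) : Prop :=
  (forall x, d <= deg g x) /\ (exists x, deg g x = d).

(* g contains a (not necessarily induced) subgraph isomorphic to K_{2,3} *)
Definition has_K23 (n : nat) (g : rel 'I_n) : Prop :=
  exists a1 a2 b1 b2 b3 : 'I_n,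
    uniq [:: a1; a2; b1; b2; b3] /\
    g a1 b1 /\ g a1 b2 /\ g a1 b3 /\ g a2 b1 /\ g a2 b2 /\ g a2 b3.

Definition add_edge (n : nat) (g : rel 'I_n) (u v : 'I_n) : rel 'I_n :=
  fun x y => [|| g x y, (x == u) && (y == v) | (x == v) && (y == u)].

Definition K23_saturated (n : nat) (g : rel 'I_n) : Prop :=
  simple_graph g /\ ~ has_K23 g /\
  (forall u v, u != v -> ~~ g u v -> has_K23 (add_edge g u v)).

Definition sat_K23_graph (n : nat) (g : rel 'I_n) : Prop :=
  K23_saturated g /\
  (forall h : rel 'I_n, K23_saturated h -> nedges g <= nedges h).

(* Main.v *)
Require Import Defs.
From mathcomp Require Import all_boot.
From Stdlib Require Import Lia.
Set Implicit Arguments. Unset Strict Implicit. Unset Printing Implicit Defensive.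

Definition com n (g : rel 'I_n) u w := [set c | g u c && g w c].

Lemma K23_com n (h : rel 'I_n) : has_K23 h -> exists u w, u != w /\ 2 < #|com h u w|.
Proof.
case=> [a1 [a2 [b1 [b2 [b3 [U [h1 [h2 [h3 [h4 [h5 h6]]]]]]]]]]].
move: U => /= . rewrite !inE !negb_or.
case/and5P => /and4P[a12 _ _ _] _ /andP[b12 b13] b23 _.
exists a1, a2; split => //.
apply/card_gt2P; exists b1, b2, b3; rewrite !inE h1 h2 h3 h4 h5 h6 b12 b23 eq_sym b13.
by split.
Qed.

Lemma com_K23 n (g : rel 'I_n) : (forall x, ~~ g x x) -> forall u w, u != w ->
  2 < #|com g u w| -> has_K23 g.
Proof.
move=> Hirr u w uw /card_gt2P [x [y [z [[xC yC zC] [xy yz zx]]]]].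
move: xC yC zC; rewrite !inE => /andP[ux wx] /andP[uy wy] /andP[uz wz].
have ne : forall a b, g a b -> a != b.
  by move=> a b gab; apply: contraTneq gab => ->; rewrite (negbTE (Hirr b)).
exists u, w, x, y, z; split; last by repeat split.
rewrite /= !inE !negb_or uw (ne _ _ ux) (ne _ _ uy) (ne _ _ uz) (ne _ _ wx) (ne _ _ wy) (ne _ _ wz) xy yz /= eq_sym zx.
by [].
Qed.

Definition nb n (g : rel 'I_n) v := [set y | g v y].
Definition Qs n (g : rel 'I_n) a : {set 'I_n} := locked (a |: nb g a).
Lemma inQs n (g : rel 'I_n) a x : (x \in Qs g a) = (x == a) || g a x.
Proof. by rewrite /Qs -lock !inE. Qed.

Lemma noK2 n (g : rel 'I_n) : (forall x, ~~ g x x) -> ~ has_K23 g ->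
  forall u w, u != w -> #|com g u w| <= 2.
Proof.
move=> Hirr HK u w uw; rewrite leqNgt; apply/negP => H.
exact: HK (com_K23 Hirr uw H).
Qed.

Lemma Qs_card n (g : rel 'I_n) a : (forall x, ~~ g x x) -> deg g a = 3 -> #|Qs g a| = 4.
Proof.
move=> Hirr Ha; rewrite /Qs -lock cardsU1 /nb inE Hirr.
by rewrite /deg in Ha; rewrite Ha.
Qed.

Lemma Qs_clique n (g : rel 'I_n) a : (forall x y, g x y = g y x) ->
  (forall a : 'I_n, deg g a = 3 -> forall x y, g a x -> g a y -> x != y -> g x y) ->
  deg g a = 3 -> forall u w, u \in Qs g a -> w \in Qs g a -> u != w -> g u w.
Proof.
move=> Hsym Hcl Ha u w; rewrite !inQs => /predU1P[->|au] /predU1P[->|aw] uw.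
- by rewrite eqxx in uw.
- by [].
- by rewrite Hsym.
- exact: (Hcl a Ha).
Qed.

Lemma Qs_self n (g : rel 'I_n) a : a \in Qs g a.
Proof. by rewrite inQs eqxx. Qed.

Lemma OUT n (g : rel 'I_n) a : (forall x, ~~ g x x) -> (forall x y, g x y = g y x) ->
  ~ has_K23 g ->
  (forall a : 'I_n, deg g a = 3 -> forall x y, g a x -> g a y -> x != y -> g x y) ->
  deg g a = 3 -> forall w, w \notin Qs g a -> #|Qs g a :&: nb g w| <= 1.
Proof.
move=> Hirr Hsym HK Hcl Ha w wQ; rewrite leqNgt; apply/negP.
move=> /card_gt1P [x [y [xI yI xy]]].
move: xI yI => /setIP[xQ]; rewrite inE => gwx /setIP[yQ]; rewrite inE => gwy.
have := noK2 Hirr HK xy; apply/negP; rewrite -ltnNge.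
set S := w |: (Qs g a :\: [set x; y]).
have cS : #|S| = 3.
  rewrite /S cardsU1 cardsD (Qs_card Hirr Ha).
  have -> : Qs g a :&: [set x; y] = [set x; y].
    by apply/setIidPr/subsetP => c /set2P[]->.
  by rewrite cards2 xy inE (negbTE wQ) andbF.
rewrite -cS; apply: subset_leq_card; apply/subsetP => c; rewrite /S !inE.
case/predU1P => [->|]; first by rewrite (Hsym x) (Hsym y) gwx gwy.
case/andP => /norP[cx cy] cQ.
rewrite !(Qs_clique Hsym Hcl Ha) //.
- by rewrite eq_sym.
- by rewrite eq_sym.
Qed.

Lemma INTER_LE1 n (g : rel 'I_n) a b : (forall x, ~~ g x x) -> (forall x y, g x y = g y x) ->
  ~ has_K23 g ->
  (forall a : 'I_n, deg g a = 3 -> forall x y, g a x -> g a y -> x != y -> g x y) ->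
  deg g a = 3 -> deg g b = 3 -> Qs g a != Qs g b -> #|Qs g a :&: Qs g b| <= 1.
Proof.
move=> Hirr Hsym HK Hcl Ha Hb ne; rewrite leqNgt; apply/negP.
move=> /card_gt1P [x [y [/setIP[xa xb] /setIP[ya yb] xy]]].
have : ~~ (Qs g b \subset Qs g a).
  apply/negP => sub; move/negP: ne; apply; rewrite eq_sym eqEcard sub.
  by rewrite (Qs_card Hirr Ha) (Qs_card Hirr Hb).
case/subsetPn => c cb ca.
have := OUT Hirr Hsym HK Hcl Ha ca; apply/negP; rewrite -ltnNge.
apply/card_gt1P; exists x, y.
split => //; rewrite in_setI /nb inE.
- rewrite xa /=; apply: (Qs_clique Hsym Hcl Hb) => //.
  by apply: contraNneq ca => ->.
- rewrite ya /=; apply: (Qs_clique Hsym Hcl Hb) => //.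
  by apply: contraNneq ca => ->.
Qed.

Lemma side n (g : rel 'I_n) a b (h : rel 'I_n) : (forall x, ~~ g x x) -> (forall x y, g x y = g y x) ->
  ~ has_K23 g ->
  (forall a : 'I_n, deg g a = 3 -> forall x y, g a x -> g a y -> x != y -> g x y) ->
  deg g a = 3 -> a != b ->
  (forall x y, h x y = [|| g x y, (x == a) && (y == b) | (x == b) && (y == a)]) ->
  forall w, w != a -> w != b -> 2 < #|com h a w| -> (w \in Qs g a) && g w b.
Proof.
move=> Hirr Hsym HK Hcl Ha ab Hh w wa wb H.
have E1 : forall c, h a c = g a c || (c == b).
  by move=> c; rewrite Hh eqxx (negbTE ab) /= orbF.
have E2 : forall c, h w c = g w c.
  by move=> c; rewrite Hh (negbTE wa) (negbTE wb) /= orbF.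
have aw : a != w by rewrite eq_sym.
have gwb : g w b.
  apply: contraTT H => ngwb; rewrite -leqNgt.
  apply: leq_trans (noK2 Hirr HK aw); apply: subset_leq_card.
  apply/subsetP => c; rewrite !inE E1 E2 => /andP[/orP[gac|/eqP cb] gwc].
  - by rewrite gac gwc.
  - by move: gwc; rewrite cb (negbTE ngwb).
rewrite gwb andbT.
apply: contraTT H => wQ; rewrite -leqNgt.
have : com h a w \subset b |: (Qs g a :&: nb g w).
  apply/subsetP => c; rewrite !inE E1 E2 => /andP[/orP[gac|/eqP ->] gwc].
  - by rewrite inQs gac orbT gwc orbT.
  - by rewrite eqxx.
move/subset_leq_card/leq_trans; apply.
rewrite cardsU1.
have := OUT Hirr Hsym HK Hcl Ha wQ.
by case: (b \notin _) => /= H1; [rewrite add1n ltnS|apply: leq_trans H1 _].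
Qed.

Lemma pairL n (g : rel 'I_n) a b (h : rel 'I_n) :
  a != b ->
  (forall x y, h x y = [|| g x y, (x == a) && (y == b) | (x == b) && (y == a)]) ->
  2 < #|com h a b| -> exists c, g a c && g b c.
Proof.
move=> ab Hh H.
have : 0 < #|com g a b|.
  move: H; apply: contraTT; rewrite -!leqNgt leqn0 => /eqP E.
  have : com h a b \subset a |: (b |: com g a b).
    apply/subsetP => c; rewrite !inE !Hh.
    case: (eqVneq c a) => [->|ca] //=; case: (eqVneq c b) => [->|cb] //=.
    by rewrite !andbF !orbF.
  move/subset_leq_card/leq_trans; apply.
  rewrite cardsU1 cardsU1 E.
  by case: (a \notin _); case: (b \notin _).
by case/card_gt0P => c; rewrite inE => ?; exists c.
Qed.

Lemma INTER_GE1 n (g : rel 'I_n) a b : (forall x, ~~ g x x) -> (forall x y, g x y = g y x) ->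
  ~ has_K23 g ->
  (forall u v, u != v -> ~~ g u v -> has_K23 (add_edge g u v)) ->
  (forall a : 'I_n, deg g a = 3 -> forall x y, g a x -> g a y -> x != y -> g x y) ->
  deg g a = 3 -> deg g b = 3 -> exists v, (v \in Qs g a) && (v \in Qs g b).
Proof.
move=> Hirr Hsym HK Hsat Hcl Ha Hb.
case: (boolP (a \in Qs g b)) => [aQ|naQ]; first by exists a; rewrite Qs_self aQ.
have ab : a != b by apply: contraNneq naQ => ->; exact: Qs_self.
have ngab : ~~ g a b by apply: contra naQ; rewrite inQs Hsym => ->; rewrite orbT.
have [u [w [uw Hc]]] := K23_com (Hsat a b ab ngab).
set h := add_edge g a b in Hc.
have Hh : forall x y, h x y = [|| g x y, (x == a) && (y == b) | (x == b) && (y == a)] by [].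
have Hh' : forall x y, h x y = [|| g x y, (x == b) && (y == a) | (x == a) && (y == b)].
  by move=> x y; rewrite Hh; congr (_ || _); exact: orbC.
have ba : b != a by rewrite eq_sym.
have comC : forall x y, com h x y = com h y x.
  by move=> x y; apply/setP => c; rewrite !inE andbC.
have key : forall u w, u != w -> 2 < #|com h u w| -> (u == a) || (u == b) ->
    exists v, (v \in Qs g a) && (v \in Qs g b).
  move=> u0 w0 uw0 H /orP[/eqP ua|/eqP ub].
  - subst u0; case: (eqVneq w0 b) => [wb|wb].
      subst w0; have [c /andP[gac gbc]] := pairL ab Hh H.
      by exists c; rewrite !inQs gac gbc !orbT.
    have w0a : w0 != a by rewrite eq_sym.
    have /andP[wQ gwb] := side Hirr Hsym HK Hcl Ha ab Hh w0a wb H.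
    by exists w0; rewrite wQ inQs Hsym gwb orbT.
  - subst u0; case: (eqVneq w0 a) => [wa|wa].
      subst w0; have [c /andP[gbc gac]] := pairL ba Hh' H.
      by exists c; rewrite !inQs gac gbc !orbT.
    have w0b : w0 != b by rewrite eq_sym.
    have /andP[wQ gwa] := side Hirr Hsym HK Hcl Hb ba Hh' w0b wa H.
    by exists w0; rewrite wQ inQs Hsym gwa orbT.
case: (boolP ((u == a) || (u == b))) => [H|Hu]; first exact: key u w uw Hc H.
case: (boolP ((w == a) || (w == b))) => [H|Hw].
  by apply: (key w u _ _ H); [rewrite eq_sym|rewrite comC].
exfalso; move: Hc; apply/negP; rewrite -leqNgt.
apply: leq_trans (noK2 Hirr HK uw); apply: subset_leq_card.
move: Hu Hw; rewrite !negb_or => /andP[/negbTE u1 /negbTE u2] /andP[/negbTE w1 /negbTE w2].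
apply/subsetP => c; rewrite !inE !Hh u1 u2 w1 w2.
by rewrite !orbF.
Qed.

Lemma card_bigcup_le (T I : finType) (A : {pred I}) (f : I -> {set T}) :
  #|\bigcup_(i in A) f i| <= \sum_(i in A) #|f i|.
Proof.
apply: (big_rec2 (fun (U : {set T}) (s : nat) => #|U| <= s)) => [|i U s _ H]; first by rewrite cards0.
apply: leq_trans (leq_card_setU _ _).1 _.
by rewrite leq_add2l.
Qed.

Lemma card_sumb (T : finType) (A : {set T}) : #|A| = \sum_x (x \in A).
Proof.
rewrite -sum1_card big_mkcond; apply: eq_bigr => x _; by case: (x \in A).
Qed.

Lemma handshake n (g : rel 'I_n) : (forall x, ~~ g x x) -> (forall x y, g x y = g y x) ->
  \sum_v deg g v = 2 * nedges g.
Proof.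
move=> Hirr Hsym.
have E1 : \sum_v deg g v = \sum_(p : 'I_n * 'I_n) g p.1 p.2.
  rewrite -(pair_bigA _ (fun x y => nat_of_bool (g x y))); apply: eq_bigr => v _; rewrite /deg card_sumb.
  by apply: eq_bigr => y _; rewrite inE.
have E2 : nedges g = \sum_(p : 'I_n * 'I_n) ((p.1 < p.2) && g p.1 p.2).
  by rewrite /nedges card_sumb; apply: eq_bigr => p _; rewrite inE.
have E3 : \sum_(p : 'I_n * 'I_n) g p.1 p.2 =
   \sum_(p : 'I_n * 'I_n) ((p.1 < p.2) && g p.1 p.2) +
   \sum_(p : 'I_n * 'I_n) ((p.2 < p.1) && g p.1 p.2).
  rewrite -big_split; apply: eq_bigr => [[x y]] _ /=.
  case: (ltngtP x y) => [_|_|exy] /=; rewrite ?addn0 //.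
  have -> : x = y by apply: val_inj.
  by rewrite (negbTE (Hirr y)).
have E4 : \sum_(p : 'I_n * 'I_n) ((p.2 < p.1) && g p.1 p.2) =
   \sum_(p : 'I_n * 'I_n) ((p.1 < p.2) && g p.1 p.2).
  have inj : injective (fun p : 'I_n * 'I_n => (p.2, p.1)).
    by move=> [a b] [c d] /= [-> ->].
  rewrite (reindex_inj inj) /=; apply: eq_bigr => p _; by rewrite Hsym.
by rewrite E1 E3 E4 E2 mul2n addnn.
Qed.

Definition DD n (g : rel 'I_n) := [set a | deg g a == 3].
Definition FF n (g : rel 'I_n) := [set Qs g a | a in DD g].

Lemma FF_inv n (g : rel 'I_n) Q : Q \in FF g -> exists2 a, deg g a = 3 & Q = Qs g a.
Proof. by case/imsetP => a; rewrite inE => /eqP Ha ->; exists a. Qed.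

Lemma deg_F n (g : rel 'I_n) : (forall x, ~~ g x x) -> (forall x y, g x y = g y x) ->
  ~ has_K23 g ->
  (forall a : 'I_n, deg g a = 3 -> forall x y, g a x -> g a y -> x != y -> g x y) ->
  forall v, 3 * #|[set Q in FF g | v \in Q]| <= deg g v.
Proof.
move=> Hirr Hsym HK Hcl v.
set Fv := [set Q in FF g | v \in Q].
set P := [set Q :\ v | Q in Fv].
have cP : #|P| = #|Fv|.
  apply: card_in_imset => Q1 Q2; rewrite !inE => /andP[_ v1] /andP[_ v2] E.
  by rewrite -(setD1K v1) -(setD1K v2) E.
have c3 : forall A, A \in P -> #|A| = 3.
  move=> A /imsetP[Q]; rewrite inE => /andP[/FF_inv[a Ha ->] vQ] ->.
  by have := cardsD1 v (Qs g a); rewrite vQ (Qs_card Hirr Ha) add1n => -[].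
have tP : trivIset P.
  apply/trivIsetP => A B /imsetP[Q1 H1 ->] /imsetP[Q2 H2 ->] ne.
  rewrite -setI_eq0; apply/negPn/negP => /set0Pn [y].
  rewrite !inE => /andP[/andP[yv yQ1] /andP[_ yQ2]].
  move: H1 H2; rewrite !inE => /andP[/FF_inv[a1 Ha1 E1] vQ1] /andP[/FF_inv[a2 Ha2 E2] vQ2].
  have Qne : Qs g a1 != Qs g a2 by apply: contraNneq ne => E; rewrite E1 E2 E.
  have := INTER_LE1 Hirr Hsym HK Hcl Ha1 Ha2 Qne; apply/negP; rewrite -ltnNge.
  apply/card_gt1P; exists y, v; rewrite !inE -E1 -E2 yQ1 yQ2 vQ1 vQ2.
  by [].
have sub : cover P \subset [set y | g v y].
  apply/subsetP => y /bigcupP[A /imsetP[Q HQ ->]].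
  move: HQ; rewrite !inE => /andP[/FF_inv[a Ha ->] vQ] /andP[yv yQ].
  by apply: (Qs_clique Hsym Hcl Ha) => //; rewrite eq_sym.
have := subset_leq_card sub; rewrite -/(deg g v).
move/eqP: tP => <-.
rewrite (eq_bigr (fun _ => 3)); last by move=> A /c3.
by rewrite sum_nat_const cP mulnC.
Qed.

Lemma U_bound n (g : rel 'I_n) : (forall x, ~~ g x x) -> (forall x y, g x y = g y x) ->
  ~ has_K23 g ->
  (forall u v, u != v -> ~~ g u v -> has_K23 (add_edge g u v)) ->
  (forall a : 'I_n, deg g a = 3 -> forall x y, g a x -> g a y -> x != y -> g x y) ->
  forall a0, deg g a0 = 3 -> #|cover (FF g)| <= 3 * #|FF g| + 1.
Proof.
move=> Hirr Hsym HK Hsat Hcl a0 Ha0.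
set Q0 := Qs g a0.
have Q0F : Q0 \in FF g by apply/imsetP; exists a0; rewrite // inE Ha0.
have sub : cover (FF g) \subset Q0 :|: \bigcup_(Q in FF g :\ Q0) (Q :\: Q0).
  apply/subsetP => x /bigcupP[Q QF xQ]; rewrite inE.
  case: (boolP (x \in Q0)) => //= xQ0.
  apply/bigcupP; exists Q; last by rewrite inE xQ0.
  by rewrite !inE QF andbT; apply: contraNneq xQ0 => <-.
apply: leq_trans (subset_leq_card sub) _.
apply: leq_trans (leq_card_setU _ _).1 _.
have hk : #|FF g| = #|FF g :\ Q0|.+1 by rewrite (cardsD1 Q0 (FF g)) Q0F add1n.
rewrite (Qs_card Hirr Ha0) hk mulnS (addnC 3) -addnA [4 + _]addnC leq_add2r.
apply: leq_trans (card_bigcup_le _ _) _.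
apply: leq_trans (_ : \sum_(Q in FF g :\ Q0) 3 <= _).
  apply: leq_sum => Q; rewrite inE => /andP[_ /FF_inv[a Ha ->]].
  rewrite cardsD (Qs_card Hirr Ha).
  have [v /andP[v1 v2]] := INTER_GE1 Hirr Hsym HK Hsat Hcl Ha Ha0.
  have : 0 < #|Qs g a :&: Q0| by apply/card_gt0P; exists v; rewrite inE v1 v2.
  by case: #|_| => // k _; rewrite subSS leq_subr.
by rewrite sum_nat_const mulnC.
Qed.

Unset Implicit Arguments.
Set Strict Implicit.

Theorem lemma6p1 (n : nat) (g : rel 'I_n) :
  sat_K23_graph g ->
  min_degree_eq g 3 ->
  (forall a : 'I_n, deg g a = 3 ->
     forall x y, g a x -> g a y -> x != y -> g x y) ->
  2 * n - 2 <= nedges g.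
Proof.
move=> [[[Hirr Hsym] [HK Hsat]] _] [Hmin [a0 Ha0]] Hcl.
set U := cover (FF g).
have hU := U_bound Hirr Hsym HK Hsat Hcl Ha0.
have hdeg : forall v, 3 * #|[set Q in FF g | v \in Q]| + 4 * (v \in ~: U) <= deg g v.
  move=> v; rewrite inE; case: (boolP (v \in U)) => vU /=.
    by rewrite muln0 addn0 (deg_F Hirr Hsym HK Hcl).
  have -> : [set Q in FF g | v \in Q] = set0.
    apply/setP => Q; rewrite !inE; apply/negP => /andP[QF vQ].
    by move/negP: vU; apply; apply/bigcupP; exists Q.
  rewrite cards0 muln0 add0n muln1.
  have := Hmin v; rewrite leq_eqVlt => /orP[/eqP H|//].
  exfalso; move/negP: vU; apply; apply/bigcupP; exists (Qs g v); last exact: Qs_self.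
  by apply/imsetP; exists v; rewrite // inE -H.
have hsum : \sum_v (3 * #|[set Q in FF g | v \in Q]| + 4 * (v \in ~: U)) <= \sum_v deg g v.
  by apply: leq_sum => v _; exact: hdeg.
rewrite handshake // big_split /= -!big_distrr /= in hsum.
have E1 : \sum_i #|[set Q in FF g | i \in Q]| = 4 * #|FF g|.
  transitivity (\sum_i \sum_Q ((Q \in FF g) && (i \in Q))).
    by apply: eq_bigr => i _; rewrite card_sumb; apply: eq_bigr => Q _; rewrite inE.
  rewrite exchange_big /= (card_sumb (FF g)) big_distrr /=.
  apply: eq_bigr => Q _; case: (boolP (Q \in FF g)) => /= QF; last first.
    by rewrite muln0; apply: big1.
  case/FF_inv: QF => a Ha ->; rewrite muln1 -(Qs_card Hirr Ha) card_sumb.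
  by [].
rewrite E1 -card_sumb in hsum.
have cU : #|U| + #|~: U| = n by rewrite cardsC card_ord.
move: hU hsum cU; set q := #|FF g|; set u := #|U|; set w := #|~: U|.
set e := nedges g => h1 h2 h3.
clear -h1 h2 h3.
move: h1 h2 h3 => /leP h1 /leP h2 h3; apply/leP.
rewrite -h3; move: h1 h2; rewrite -?multE -?plusE -?minusE => h1 h2; lia.
Qed.
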